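(* Write $M=\{f=1\}$ and $M^*=\{f^*=1\}$ for positively 1-homogeneous functions $f,f^*:\mathbb{R}^{2d}\to\mathbb{R}$. For a point $x$ in the exterior of both $M$ and $M^*$ we have $-n_+(x)=R^*\left(\frac{x}{f^*(x)}\right)$ and $-n_-(x)=R^*\left(\frac{-x}{f^*(-x)}\right)$.
   Context: Work in $\mathbb{R}^{2d}$ with its standard symplectic form $\omega$. Let $M\subset\mathbb{R}^{2d}$ be a smooth hypersurface bounding a quadratically convex domain containing the origin in its interior. For $x\in M$, $R(x)$ is the unique vector with $\omega(v,R(x))=0$ for all $v\in T_xM$ and $\omega(x,R(x))=1$ (the Reeb vector field); $M^*=R(M)$ is the symplectic polar of $M$, and $R^*$ is the corresponding Reeb map for $M^*$ (defined in the same way with $M^*$ in place of $M$). Write $a\sim b$ if the vectors $a,b$ are proportional with a positive coefficient. For $x$ in the exterior of $M$, $n_-(x)\in M$ and $n_+(x)\in M$ denote the unique points with $R(n_-(x))\sim -x$ and $R(n_+(x))\sim x$ (explicitly $n_\pm(x)=G^{-1}(\mp Jx/|x|)$, where $G$ is the outward normal Gauss map of $M$ and $J$ is multiplication by $\sqrt{-1}$ under $\mathbb{R}^{2d}=\mathbb{C}^d$). It is known that $R^*\circ R=-\mathrm{id}_M$. *)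

(* Defs.v *)
From HB Require Import structures.
From mathcomp Require Import all_boot all_order all_algebra.
From mathcomp Require Import all_classical all_reals all_analysis.
Set Implicit Arguments. Unset Strict Implicit. Unset Printing Implicit Defensive.
Import Order.TTheory GRing.Theory Num.Theory.
Import numFieldNormedType.Exports.
Local Open Scope classical_set_scope.
Local Open Scope ring_scope.

(* R^{2d} = C^d, coordinates (x_1..x_d, y_1..y_d) with z_k = x_k + i y_k. *)
Notation vec R d := 'rV[R]_(d + d).

Section Defs.
Variables (R : realType) (d : nat).

(* J = multiplication by sqrt(-1): (x, y) |-> (-y, x) *)
Definition Jmul (v : vec R d) : vec R d := row_mx (- rsubmx v) (lsubmx v).

Definition dotp (u v : vec R d) : R := \sum_i u ord0 i * v ord0 i.

(* standard symplectic form omega(u,v) = <J u, v> = sum_k dx_k /\ dy_k *)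
Definition omega (u v : vec R d) : R := dotp (Jmul u) v.

Definition posprop (a b : vec R d) : Prop := exists c : R, 0 < c /\ a = c *: b.

Definition pos_hom1 (f : vec R d -> R) : Prop :=
  forall (t : R) (x : vec R d), 0 < t -> f (t *: x) = t * f x.

Fixpoint iterD (vs : seq (vec R d)) (f : vec R d -> R) : vec R d -> R :=
  match vs with
  | [::] => f
  | v :: vs' => fun y => derive (iterD vs' f) y v
  end.

Definition smooth_away0 (f : vec R d -> R) : Prop :=
  forall (vs : seq (vec R d)) (x : vec R d), x != 0 -> differentiable (iterD vs f) x.

Definition convexf (f : vec R d -> R) : Prop :=
  forall (x y : vec R d) (t : R), 0 <= t <= 1 ->
    f ((1 - t) *: x + t *: y) <= (1 - t) * f x + t * f y.

Definition tangent (f : vec R d -> R) (x : vec R d) : set (vec R d) :=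
  [set v | 'd f x v = 0].

(* M = {f = 1} is a smooth hypersurface bounding a quadratically convex
   domain {f <= 1} containing the origin in its interior: f is the gauge *)
Definition qconvex_gauge (f : vec R d -> R) : Prop :=
  [/\ pos_hom1 f,
      (forall x, x != 0 -> 0 < f x),
      smooth_away0 f,
      convexf f &
      (* positive definite second fundamental form *)
      forall x v, f x = 1 -> v != 0 -> tangent f x v ->
        0 < derive (fun y => derive f y v) x v].

Definition isReeb (f : vec R d -> R) (x r : vec R d) : Prop :=
  (forall v, tangent f x v -> omega v r = 0) /\ omega x r = 1.

Definition Reeb (f : vec R d -> R) (x : vec R d) : vec R d :=
  xget 0 (isReeb f x).

Definition n_plus (f : vec R d -> R) (x : vec R d) : vec R d :=
  xget 0 [set y | f y = 1 /\ posprop (Reeb f y) x].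
Definition n_minus (f : vec R d -> R) (x : vec R d) : vec R d :=
  xget 0 [set y | f y = 1 /\ posprop (Reeb f y) (- x)].

End Defs.

(* Main.v *)
Require Import Defs.
From HB Require Import structures.
From mathcomp Require Import all_boot all_order all_algebra.
From mathcomp Require Import all_classical all_reals all_analysis.
From mathcomp Require Import ring lra.
Import Order.TTheory GRing.Theory Num.Theory.
Import numFieldNormedType.Exports.
Local Open Scope classical_set_scope.
Local Open Scope ring_scope.
Section S.
Variables (R : realType) (V : normedModType R).

Lemma right_sub : (0:R)^'+ `=>` (0:R)^'.
Proof.
move=> P; rewrite /dnbhs /within /=; apply: filterS => y Py /[dup] y0.
by rewrite lt0r => /andP[+ _]; apply: Py.
Qed.

Lemma der_le (F : V -> R) a v c : derivable F a v ->
  (\forall t \near 0^'+, t^-1 * (F (t *: v + a) - F a) <= c) ->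
  derive F a v <= c.
Proof.
move=> /cvg_ex[l hl] hn.
have -> : derive F a v = l by rewrite /derive; exact: cvg_lim.
have hl' := cvg_trans (cvg_app _ right_sub) hl.
apply: (cvgr_to_le hl'); apply: filterS hn => t /=.
by rewrite /shift /= addrC.
Qed.

Lemma der_ge (F : V -> R) a v c : derivable F a v ->
  (\forall t \near 0^'+, c <= t^-1 * (F (t *: v + a) - F a)) ->
  c <= derive F a v.
Proof.
move=> /cvg_ex[l hl] hn.
have -> : derive F a v = l by rewrite /derive; exact: cvg_lim.
have hl' := cvg_trans (cvg_app _ right_sub) hl.
apply: (cvgr_to_ge hl'); apply: filterS hn => t /=.
by rewrite /shift /= addrC.
Qed.
End S.

Set Implicit Arguments. Unset Strict Implicit.
Section Alg.
Variables (R : realType) (d : nat).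
Implicit Types (u v w : vec R d).

Definition Jinv (r : vec R d) : vec R d := row_mx (rsubmx r) (- lsubmx r).

Lemma JmulK r : Jmul (Jinv r) = r.
Proof. by rewrite /Jmul /Jinv row_mxKl row_mxKr opprK hsubmxK. Qed.

Lemma JinvK r : Jinv (Jmul r) = r.
Proof. by rewrite /Jmul /Jinv row_mxKl row_mxKr opprK hsubmxK. Qed.

Lemma JmulD a u v : Jmul (a *: u + v) = a *: Jmul u + Jmul v.
Proof.
by rewrite /Jmul !linearD !linearZ /= scale_row_mx add_row_mx scalerN.
Qed.

Lemma dotpC u v : dotp u v = dotp v u.
Proof. by apply: eq_bigr => i _; rewrite mulrC. Qed.

Lemma dotpDr a u v w : dotp w (a *: u + v) = a * dotp w u + dotp w v.
Proof.
rewrite /dotp mulr_sumr -big_split /=; apply: eq_bigr => i _.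
by rewrite !mxE; ring.
Qed.

Lemma dotpDl a u v w : dotp (a *: u + v) w = a * dotp u w + dotp v w.
Proof. by rewrite dotpC dotpDr (dotpC w) (dotpC w). Qed.

Lemma dotp_ge0 u : 0 <= dotp u u.
Proof. by apply: sumr_ge0 => i _; rewrite -expr2 sqr_ge0. Qed.

Lemma dotp_eq0 u : dotp u u = 0 -> u = 0.
Proof.
move=> /eqP; rewrite psumr_eq0 => [/allP H|i _]; last by rewrite -expr2 sqr_ge0.
apply/rowP => i; rewrite mxE; apply/eqP.
by have := H i (mem_index_enum _); rewrite /= mulf_eq0 orbb.
Qed.

Lemma omegaDl a u v w : omega (a *: u + v) w = a * omega u w + omega v w.
Proof. by rewrite /omega JmulD dotpDl. Qed.

Lemma omegaDr a u v w : omega w (a *: u + v) = a * omega w u + omega w v.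
Proof. by rewrite /omega dotpDr. Qed.

Lemma Jmul0 : Jmul (0 : vec R d) = 0.
Proof. by rewrite /Jmul !linear0 row_mx0. Qed.

Lemma omegaZl a u w : omega (a *: u) w = a * omega u w.
Proof.
have := JmulD a u 0; rewrite Jmul0 !addr0 => E.
by rewrite /omega E /dotp mulr_sumr; apply: eq_bigr => i _; rewrite mxE; ring.
Qed.

Lemma omegaZr a u w : omega w (a *: u) = a * omega w u.
Proof. rewrite /omega /dotp mulr_sumr; apply: eq_bigr => i _; rewrite [(a *: u) _ _]mxE; ring. Qed.

Lemma omegaNl u w : omega (- u) w = - omega u w.
Proof. by rewrite -scaleN1r omegaZl mulN1r. Qed.

Lemma omegaNr u w : omega w (- u) = - omega w u.
Proof. by rewrite -scaleN1r omegaZr mulN1r. Qed.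

Lemma omegaDl' u v w : omega (u + v) w = omega u w + omega v w.
Proof. by rewrite -{1}(scale1r u) omegaDl mul1r. Qed.

Lemma omegaDr' u v w : omega w (u + v) = omega w u + omega w v.
Proof. by rewrite -{1}(scale1r u) omegaDr mul1r. Qed.

Lemma omegaA u v : omega u v = - omega v u.
Proof.
rewrite /omega /dotp !big_split_ord /= /Jmul.
rewrite opprD -!sumrN addrC; congr (_ + _); apply: eq_bigr => i _;
  rewrite ?row_mxEl ?row_mxEr !mxE; ring.
Qed.

Lemma omegaJinv r w : omega (Jinv r) w = dotp r w.
Proof. by rewrite /omega JmulK. Qed.

Lemma dotp_delta (i : 'I_(d + d)) w : dotp (delta_mx 0 i) w = w ord0 i.
Proof.
rewrite /dotp (bigD1 i) //= big1 => [|j /negbTE ji]; last by rewrite mxE ji andbF mul0r.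
by rewrite mxE !eqxx mul1r addr0.
Qed.

End Alg.

Unset Implicit Arguments. Set Strict Implicit.
Lemma hom0 (R : realType) (d : nat) (g : vec R d -> R) : pos_hom1 g -> g 0 = 0.
Proof.
move=> h; have := h 2 0 (ltr0Sn _ 1); rewrite scaler0 => E; lra.
Qed.

Arguments hom0 {R d g}.

Section Geo.
Variables (R : realType) (d : nat) (f fstar : vec R d -> R).
Hypothesis hf : qconvex_gauge f.
Hypothesis hfs_hom : pos_hom1 fstar.
Hypothesis hfs_diff : forall x : vec R d, x != 0 -> differentiable fstar x.
Hypothesis hMstar : forall z : vec R d,
      fstar z = 1 <-> exists2 y : vec R d, f y = 1 & z = Reeb f y.

Lemma f_hom : pos_hom1 f. Proof. by case: hf. Qed.
Lemma f_pos x : x != 0 -> 0 < f x. Proof. by case: hf => _ h _ _ _; apply: h. Qed.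
Lemma f_conv : convexf f. Proof. by case: hf. Qed.
Lemma f_diff x : x != 0 -> differentiable f x.
Proof. move=> hx; case: hf => _ _ h _ _; exact: (h [::] x hx). Qed.

Lemma f_ge0 x : 0 <= f x.
Proof.
by have [->|/f_pos/ltW//] := eqVneq x 0; rewrite (hom0 f_hom).
Qed.

Lemma f1_neq0 y : f y = 1 -> y != 0.
Proof. by move=> fy; apply/eqP => y0; move: fy; rewrite y0 (hom0 f_hom); lra. Qed.

Lemma euler y : y != 0 -> 'd f y y = f y.
Proof.
move=> y0; rewrite -deriveE; last exact: f_diff.
have dv : derivable f y y := diff_derivable (f_diff _ y0).
have E : \forall t \near (0:R)^'+, t^-1 * (f (t *: y + y) - f y) = f y.
  apply: filterS (nbhs_right_gt 0) => t t0.
  rewrite -{2}(scale1r y) -scalerDl f_hom; last lra.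
  by field; rewrite gt_eqF.
apply/eqP; rewrite eq_le; apply/andP; split.
  by apply: der_le dv _; apply: filterS E => t ->.
by apply: der_ge dv _; apply: filterS E => t ->.
Qed.

Lemma grad y w : y != 0 -> 'd f y (w - y) <= f w - f y.
Proof.
move=> y0; rewrite -deriveE; last exact: f_diff.
apply: der_le; first exact: (diff_derivable (f_diff _ y0)).
apply: (filterS2 _ _ (nbhs_right_gt 0)) (nbhs_right_le ltr01) => t t0 t1.
have E : t *: (w - y) + y = (1 - t) *: y + t *: w.
  by apply/rowP => i; rewrite !mxE; ring.
rewrite E ler_pdivrMl //.
have := f_conv y w t; rewrite t1 ltW //= => /(_ isT) h.
nra.
Qed.

Lemma subadd a b : f (a + b) <= f a + f b.
Proof.
have E : a + b = (1 - 2^-1) *: (2 *: a) + 2^-1 *: (2 *: b).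
  rewrite !scalerA (_ : 1 - 2^-1 = 2^-1 :> R); last by field.
  by rewrite mulVf ?pnatr_eq0 // !scale1r.
have H : (0 <= (2:R)^-1) && ((2:R)^-1 <= 1) by apply/andP; split; lra.
have := f_conv (2 *: a) (2 *: b) (2^-1) H; rewrite -E => h; apply: le_trans h _.
rewrite !f_hom ?ltr0n // (_ : 1 - 2^-1 = 2^-1 :> R); last by field.
by rewrite !mulrA mulVf ?pnatr_eq0 // !mul1r.
Qed.

Lemma decomp y r v : f y = 1 -> isReeb f y r -> omega v r = 'd f y v.
Proof.
move=> fy [ht h1]; have y0 := f1_neq0 _ fy.
set a := 'd f y v.
have t : tangent f y (v - a *: y).
  by rewrite /tangent /= linearB linearZ /= euler // fy -/a -[a%:A]/(a * 1) mulr1 subrr.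
have -> : v = (v - a *: y) + a *: y by rewrite subrK.
by rewrite omegaDl' omegaZl (ht _ t) h1 mulr1 add0r.
Qed.

Lemma reeb_le1 y y' r : f y = 1 -> f y' = 1 -> isReeb f y' r -> omega y r <= 1.
Proof.
move=> fy fy' hr; rewrite (decomp _ _ y fy' hr).
have y0 := f1_neq0 _ fy'.
have := grad y' y y0; rewrite linearB /= euler // fy fy'; lra.
Qed.

Lemma coord_bound y r (i : 'I_(d+d)) : f y = 1 -> isReeb f y r ->
  (r ord0 i)^+2 <= (f (Jinv (delta_mx 0 i)) + f (- Jinv (delta_mx 0 i)))^+2.
Proof.
move=> fy hr; have y0 := f1_neq0 _ fy.
set u := Jinv (delta_mx 0 i).
have e1 : r ord0 i = 'd f y u by rewrite -dotp_delta -omegaJinv (decomp _ _ _ fy hr).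
have g1 : forall v, 'd f y v <= f v.
  move=> v; have := grad y (y + v) y0; rewrite (_ : y + v - y = v); last by rewrite addrC addKr.
  have := subadd y v; lra.
have b1 := g1 u; have b2 := g1 (- u); rewrite linearN /= in b2.
have := f_ge0 u; have := f_ge0 (- u); rewrite e1; nra.
Qed.

Definition B2 := \sum_(i < d+d) (f (Jinv (delta_mx 0 i)) + f (- Jinv (delta_mx 0 i)))^+2.

Lemma reeb_bound y r : f y = 1 -> isReeb f y r -> dotp r r <= B2.
Proof.
move=> fy hr; rewrite /dotp /B2; apply: ler_sum => i _; rewrite -expr2.
exact: (coord_bound _ _ i fy hr).
Qed.

Lemma B2_ge0 : 0 <= B2.
Proof. by apply: sumr_ge0 => i _; rewrite sqr_ge0. Qed.

Lemma reeb_ex w : fstar w = 1 -> exists2 y, f y = 1 & isReeb f y w.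
Proof.
move=> /hMstar [y fy ->]; exists y => //.
have [ex|nex] := pselect (exists r, isReeb f y r); first exact: xgetPex.
have := (hMstar (Reeb f y)).2 (ex_intro2 _ _ y fy erefl).
rewrite /Reeb xgetPN ?(hom0 hfs_hom) => [|r hr]; first lra.
by apply: nex; exists r.
Qed.

Lemma dotpZZ (c : R) (u : vec R d) : dotp (c *: u) (c *: u) = c ^+ 2 * dotp u u.
Proof. by rewrite /dotp mulr_sumr; apply: eq_bigr => i _; rewrite !mxE; ring. Qed.

Lemma pos_bound w : 0 < fstar w -> dotp w w <= B2 * fstar w ^+ 2.
Proof.
move=> hw; set c := fstar w.
have fw' : fstar (c^-1 *: w) = 1 by rewrite hfs_hom ?invr_gt0 // mulVf ?gt_eqF.
have [y fy hr] := reeb_ex _ fw'.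
have := reeb_bound _ _ fy hr.
have E : w = c *: (c^-1 *: w) by rewrite scalerA mulfV ?gt_eqF // scale1r.
have := dotpZZ c (c^-1 *: w); rewrite -E => -> h.
rewrite [X in _ <= X]mulrC; apply: ler_wpM2l => //; exact: sqr_ge0.
Qed.

Lemma RR y z : f y = 1 -> isReeb f y z -> fstar z = 1 -> Reeb fstar z = - y.
Proof.
move=> fy [hty h1] fz.
have z0 : z != 0 by apply/eqP => z0; move: fz; rewrite z0 (hom0 hfs_hom); lra.
have cz : {for z, continuous fstar} := differentiable_continuous (hfs_diff _ z0).
have near1 : \forall w \near z, 0 < fstar w.
  by apply: (@cvgr_gt _ _ _ _ _ _ cz); rewrite fz; exact: ltr01.
have ineq : \forall w \near z, omega y w <= fstar w.
  apply: filterS near1 => w hw; set c := fstar w.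
  have fw' : fstar (c^-1 *: w) = 1 by rewrite hfs_hom ?invr_gt0 // mulVf ?gt_eqF.
  have [y' fy' hr] := reeb_ex _ fw'.
  have := reeb_le1 _ _ _ fy fy' hr; rewrite omegaZr => h.
  have c0 : c != 0 by rewrite gt_eqF.
  rewrite -[omega y w](mulVKf c0).
  apply: le_trans (_ : c * 1 <= c); last by rewrite mulr1.
  by apply: ler_wpM2l => //; exact: ltW.
have tv : forall v, (fun t : R => t *: v + z) @ (0:R)^'+ --> z.
  move=> v; apply: cvg_at_right_filter.
  have := cvgD (cvgZr_tmp (a:=v) (@cvg_id _ (nbhs (0:R)))) (cvg_cst z).
  by rewrite scale0r add0r; apply.
have dge : forall v, omega y v <= 'd fstar z v.
  move=> v; rewrite -deriveE; last exact: hfs_diff.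
  apply: der_ge; first exact: (diff_derivable (hfs_diff _ z0)).
  apply: (filterS2 _ _ (nbhs_right_gt 0) (tv v _ ineq)) => t t0 /=.
  by rewrite omegaDr h1 fz ler_pdivlMl // => h; lra.
have dz : forall v, 'd fstar z v = omega y v.
  move=> v; apply/eqP; rewrite eq_le dge andbT.
  by have := dge (- v); rewrite omegaNr linearN /= lerN2.
have tz : forall v, tangent fstar z v <-> omega y v = 0.
  by move=> v; rewrite /tangent /= dz.
rewrite /Reeb; apply: xget_unique => [|r [hr1 hr2]].
  split; last by rewrite omegaNr omegaA opprK h1.
  by move=> v /tz hv; rewrite omegaNr omegaA opprK hv.
set s := r + y.
have hzs : omega z s = 0 by rewrite omegaDr' hr2 omegaA h1; lra.
have hs : forall v, omega v s = 0.
  move=> v; set a := omega y v.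
  have tg : tangent fstar z (v - a *: z).
    by apply/tz; rewrite omegaDr' omegaNr omegaZr h1 mulr1 subrr.
  have H0 : omega (v - a *: z) s = 0.
    by rewrite omegaDr' (hr1 _ tg) omegaA (proj1 (tz _) tg) oppr0 addr0.
  have -> : v = (v - a *: z) + a *: z by rewrite subrK.
  by rewrite omegaDl' omegaZl hzs mulr0 addr0 H0.
have := hs (Jinv s); rewrite omegaJinv => /dotp_eq0 s0.
by apply/eqP; rewrite -subr_eq0 opprK -/s s0.
Qed.

Lemma dotpZr (c : R) (u w : vec R d) : dotp w (c *: u) = c * dotp w u.
Proof. by rewrite /dotp mulr_sumr; apply: eq_bigr => i _; rewrite mxE; ring. Qed.

Lemma dotp_gt0 (u : vec R d) : u != 0 -> 0 < dotp u u.
Proof.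
move=> u0; rewrite lt0r dotp_ge0 andbT; apply/eqP => /dotp_eq0 h.
by rewrite h eqxx in u0.
Qed.

Lemma seg a b : dotp a b = 0 -> a != 0 -> b != 0 -> 0 < fstar a -> 0 < fstar b.
Proof.
move=> ab a0 b0 fa; rewrite ltNge; apply/negP => fb.
pose g := fun s : R => (1 - s) *: a + s *: b.
have aa := dotp_gt0 _ a0; have bb := dotp_gt0 _ b0.
have gne : forall s, g s != 0.
  move=> s; apply/eqP => gs.
  have : dotp a (g s) = 0 by rewrite gs /dotp big1 // => i _; rewrite mxE mulr0.
  rewrite /g dotpDr dotpZr ab mulr0 addr0 => /eqP; rewrite mulf_eq0 (gt_eqF aa) orbF.
  rewrite subr_eq0 => /eqP s1; move: gs; rewrite /g -s1 subrr scale0r add0r scale1r.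
  by move/eqP; rewrite (negbTE b0).
have gg : forall s, dotp (g s) (g s) = (1 - s) * (1 - s) * dotp a a + s * s * dotp b b.
  move=> s; rewrite /g !(dotpDl, dotpDr, dotpZr) !(dotpC (s *: b)) !dotpZr ab; ring.
pose K := 4 * (B2 + 1).
have K0 : 0 < K by have := B2_ge0; rewrite /K; lra.
pose h := fun s => K * (fstar (g s) * `|fstar (g s)|) - dotp (g s) (g s).
have hE : h = fun s => K * (fstar (g s) * `|fstar (g s)|) -
    ((1 - s) * (1 - s) * dotp a a + s * s * dotp b b).
  by apply/funext => s; rewrite /h gg.
have g0 : g 0 = a by rewrite /g subr0 scale1r scale0r addr0.
have g1 : g 1 = b by rewrite /g subrr scale0r add0r scale1r.
have h0 : 0 < h 0.
  rewrite /h g0 ger0_norm ?ltW //.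
  have := pos_bound _ fa; have := B2_ge0; have := mulr_gt0 fa fa; rewrite /K; nra.
have h1 : h 1 < 0.
  rewrite /h g1 ler0_norm //; nra.
have cont : {within `[0, 1], continuous h}.
  apply: continuous_in_subspaceT => s _.
  have cg : {for s, continuous g}.
    apply: cvgD; last by apply: cvgZr_tmp; exact: cvg_id.
    by apply: cvgZr_tmp; apply: cvgB; [exact: cvg_cst | exact: cvg_id].
  have cF : {for s, continuous (fun s => fstar (g s))}.
    exact: (continuous_comp cg (differentiable_continuous (hfs_diff _ (gne s)))).
  rewrite hE; apply: cvgB.
    apply: cvgM; first exact: cvg_cst.
    by apply: cvgM; [exact: cF | exact: cvg_norm cF].
  apply: cvgD; apply: cvgM; try exact: cvg_cst.
    by apply: cvgM; apply: cvgB; try exact: cvg_cst; exact: cvg_id.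
  by apply: cvgM; exact: cvg_id.
have [c _ hc] : exists2 c, c \in `[0, 1] & h c = 0.
  apply: IVT => //.
  by rewrite ge_min le_max (ltW h1) (ltW h0) orbT.
have pc := dotp_gt0 _ (gne c).
have Fc : 0 < fstar (g c).
  rewrite ltNge; apply/negP => Fc.
  move: hc; rewrite /h ler0_norm //; nra.
move: hc; rewrite /h ger0_norm ?ltW //; have := pos_bound _ Fc; have := B2_ge0.
have := mulr_gt0 Fc Fc; rewrite /K; nra.
Qed.

Lemma reeb_isReeb y : fstar (Reeb f y) = 1 -> isReeb f y (Reeb f y).
Proof.
move=> h; have [ex|nex] := pselect (exists r, isReeb f y r); first exact: xgetPex.
move: h; rewrite /Reeb xgetPN ?(hom0 hfs_hom) => [|r hr]; first lra.
by apply: nex; exists r.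
Qed.

Lemma gen w : 0 < fstar w ->
  - xget 0 [set y | f y = 1 /\ posprop (Reeb f y) w] = Reeb fstar ((fstar w)^-1 *: w).
Proof.
move=> hw; set c := (fstar w)^-1.
have c0 : 0 < c by rewrite invr_gt0.
have fz : fstar (c *: w) = 1 by rewrite hfs_hom // mulVf ?gt_eqF.
have [y0 fy0 e0] := (hMstar _).1 fz.
have ex : exists y, [set y | f y = 1 /\ posprop (Reeb f y) w] y.
  by exists y0; split => //; exists c; split => //; rewrite -e0.
have [fy1 [c1 [c10 e1]]] := xgetPex 0 ex.
set y1 := xget _ _ in fy1 e1 *.
have fR : fstar (Reeb f y1) = 1 by apply/hMstar; exists y1.
have hc1 := fR; rewrite e1 hfs_hom // in hc1.
have wn : fstar w != 0 by rewrite gt_eqF.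
have cc : c1 = c by rewrite /c -[c1](mulfK wn) hc1 mul1r.
rewrite cc in e1.
by rewrite -e1 (RR _ _ fy1 (reeb_isReeb _ fR) fR).
Qed.

Lemma final x : 1 < f x -> 1 < fstar x ->
  - n_plus f x = Reeb fstar ((fstar x)^-1 *: x) /\
  - n_minus f x = Reeb fstar ((fstar (- x))^-1 *: (- x)).
Proof.
move=> hxM hxMs; have fx : 0 < fstar x by lra.
split; first exact: gen.
have x0 : x != 0 by apply/eqP => x0; move: hxM; rewrite x0 (hom0 f_hom); lra.
have Jx0 : Jmul x != 0.
  apply/eqP => J0; move/eqP: x0; apply; rewrite -(JinvK x) J0.
  by rewrite /Jinv !linear0 ?oppr0 row_mx0.
have oxx : dotp (Jmul x) x = 0 by have := omegaA x x; rewrite /omega; lra.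
have fJ : 0 < fstar (Jmul x) by apply: (seg x) => //; rewrite dotpC.
have fN : 0 < fstar (- x).
  apply: (seg (Jmul x)) => //; last by rewrite oppr_eq0.
  by rewrite -scaleN1r dotpZr oxx mulr0.
exact: gen.
Qed.

End Geo.


Theorem lemma2p6 (R : realType) (d : nat) (f fstar : vec R d -> R)
  (hf : qconvex_gauge f)
  (hfs_hom : pos_hom1 fstar)
  (hfs_diff : forall x : vec R d, x != 0 -> differentiable fstar x)
  (hMstar : forall z : vec R d,
      fstar z = 1 <-> exists2 y : vec R d, f y = 1 & z = Reeb f y)
  (x : vec R d) (hxM : 1 < f x) (hxMs : 1 < fstar x) :
  - n_plus f x = Reeb fstar ((fstar x)^-1 *: x) /\
  - n_minus f x = Reeb fstar ((fstar (- x))^-1 *: (- x)).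
Proof. by apply: final. Qed.
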